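(* Let $m,n$ be positive integers and $x>2$ real. Define $\alpha_j>0$ ($1\le j\le n$) and $\beta_k>0$ ($1\le k\le m$) by $$\cosh\alpha_j+\cos\frac{\pi j}{n+1}=x=\cosh\beta_k+\cos\frac{\pi k}{m+1}.$$ Then $$\prod_{j=1}^n\frac{\sinh\big((m+1)\alpha_j\big)}{\sinh\alpha_j}=\prod_{k=1}^m\frac{\sinh\big((n+1)\beta_k\big)}{\sinh\beta_k}.$$ *)

(* Defs.v *)
From Stdlib Require Import Reals Lra Lia.
Open Scope R_scope.

Fixpoint prod_1_to (n : nat) (f : nat -> R) : R :=
  match n with
  | O => 1
  | S k => prod_1_to k f * f (S k)
  end.

(* Main.v *)
Require Import Defs.
From Stdlib Require Import Reals Lra Lia.
From mathcomp Require all_boot all_algebra Rstruct zify.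
Open Scope R_scope.
Definition R2 : R := 2.

Lemma prod_ext n f g : (forall k, (1 <= k <= n)%nat -> f k = g k) ->
  prod_1_to n f = prod_1_to n g.
Proof.
  induction n; intros H; simpl; auto.
  rewrite IHn; [rewrite H; [reflexivity| lia] | intros; apply H; lia].
Qed.

Lemma prod_mul n f g : prod_1_to n (fun k => f k * g k) = prod_1_to n f * prod_1_to n g.
Proof. induction n; simpl; [ring | rewrite IHn; ring]. Qed.

Lemma prod_swap n m (F : nat -> nat -> R) :
  prod_1_to n (fun j => prod_1_to m (fun k => F j k)) =
  prod_1_to m (fun k => prod_1_to n (fun j => F j k)).
Proof.
  induction n; simpl.
  - induction m; simpl; [reflexivity| rewrite <- IHm; ring].
  - rewrite IHn, <- prod_mul. reflexivity.
Qed.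

Lemma sinh_rec u a : sinh (u + a) = R2 * cosh a * sinh u - sinh (u - a).
Proof.
  unfold R2, sinh, cosh, Rminus. rewrite !exp_plus, !Ropp_plus_distr, !exp_plus, !Ropp_involutive, !exp_Ropp.
  assert (exp u > 0) by apply exp_pos. assert (exp a > 0) by apply exp_pos.
  field; lra.
Qed.

Lemma sin_rec u a : sin (u + a) = R2 * cos a * sin u - sin (u - a).
Proof. unfold R2; rewrite sin_plus, sin_minus. ring. Qed.
Definition tt (m k : nat) : R := PI * INR k / INR (m + 1).
Definition cc (m k : nat) : R := cos (tt m k).

Lemma tt_bounds m k : (1 <= k <= m)%nat -> 0 < tt m k < PI.
Proof.
  intros [h1 h2]. unfold tt. pose proof PI_RGT_0.
  assert (0 < INR k) by (apply lt_0_INR; lia).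
  assert (INR k < INR (m+1)) by (apply lt_INR; lia).
  split; [apply Rdiv_lt_0_compat; nra |].
  apply Rmult_lt_reg_r with (INR (m+1)); [lra|].
  unfold Rdiv; rewrite Rmult_assoc, Rinv_l; nra.
Qed.

Lemma tt_root m k : sin (INR (S m) * tt m k) = 0.
Proof.
  apply sin_eq_0_1. exists (Z.of_nat k). rewrite <- INR_IZR_INZ.
  unfold tt. replace (S m) with (m + 1)%nat by lia.
  assert (0 < INR (m+1)) by (apply lt_0_INR; lia). field. lra.
Qed.

Lemma cc_inj m k l : (1 <= k <= m)%nat -> (1 <= l <= m)%nat -> cc m k = cc m l -> k = l.
Proof.
  intros hk hl e. pose proof (tt_bounds _ _ hk). pose proof (tt_bounds _ _ hl).
  assert (0 < INR (m+1)) by (apply lt_0_INR; lia).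
  destruct (Nat.lt_total k l) as [h|[h|h]]; auto; exfalso.
  - assert (tt m k < tt m l). { unfold tt, Rdiv. apply Rmult_lt_compat_r. apply Rinv_0_lt_compat; lra.
      apply Rmult_lt_compat_l. apply PI_RGT_0. apply lt_INR; lia. }
    pose proof (cos_decreasing_1 (tt m k) (tt m l)). unfold cc in e. lra.
  - assert (tt m l < tt m k). { unfold tt, Rdiv. apply Rmult_lt_compat_r. apply Rinv_0_lt_compat; lra.
      apply Rmult_lt_compat_l. apply PI_RGT_0. apply lt_INR; lia. }
    pose proof (cos_decreasing_1 (tt m l) (tt m k)). unfold cc in e. lra.
Qed.

Lemma root_aux (v s : R) : 0 < s -> v * s = 0 -> v = 0.
Proof. intros. apply Rmult_eq_reg_r with s; lra. Qed.
Lemma R2_INR : R2 = INR 2. Proof. unfold R2; simpl; ring. Qed.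
Lemma prod_const n c : prod_1_to n (fun _ => c) = c ^ n.
Proof. induction n; simpl; [ring| rewrite IHn; ring]. Qed.

Lemma toR0 (a1 b1 c s : R) : Rmult (Rplus (Rplus (Rmult a1 c) (Rmult a1 c)) (Ropp b1)) s = R2 * c * (a1 * s) - b1 * s.
Proof. unfold R2. ring. Qed.
Lemma ssimp a : 1 * a = a. Proof. ring. Qed.
Lemma ssimp0 a : 0 * a = 0. Proof. ring. Qed.
Lemma ssimp1 a b : (a + 1) * b = a * b + b. Proof. ring. Qed.
Lemma ssimp3 a b : a * b = (a + 1) * b - b. Proof. ring. Qed.
Lemma divK0 a b : b <> 0 -> a * b / b = a. Proof. intros; field; auto. Qed.

Module ChebHelp.
Import all_boot all_algebra Rstruct zify.
Import GRing.Theory Num.Theory.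
Local Open Scope ring_scope.

Fixpoint Up (n : nat) : {poly R} * {poly R} :=
  if n is n'.+1 then ((Up n').1 * 'X *+ 2 - (Up n').2, (Up n').1) else (1, 0).

Lemma Up_size n : size (Up n).1 = n.+1 /\ lead_coef (Up n).1 = 2%:R ^+ n /\ (size (Up n).2 <= n)%N.
Proof.
elim: n => [|n [s1 [l1 s2]]] /=.
  by rewrite size_poly1 lead_coef1 size_poly0 expr0.
have nz : (Up n).1 != 0 by rewrite -size_poly_eq0 s1.
have h2 : size ((Up n).1 * 'X *+ 2) = n.+2.
  by rewrite -scaler_nat size_scale ?pnatr_eq0 // size_mulX // s1.
have hlt : (size (- (Up n).2) < size ((Up n).1 * 'X *+ 2))%N.
  by rewrite size_polyN h2 ltnS (leq_trans s2).
split; first by rewrite size_addl // h2.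
split; last by rewrite s1.
rewrite lead_coefDl // -scaler_nat lead_coefZ lead_coefMX l1.
by rewrite exprS.
Qed.

Lemma toR (a1 b1 c s : R) : Rmult ((a1 * c) *+ 2 - b1) s = Rminus (Rmult (Rmult R2 c) (Rmult a1 s)) (Rmult b1 s).
Proof. rewrite mulr2n; exact: toR0. Qed.

Lemma Up_sinh n a : Rmult (Up n).1.[cosh a] (sinh a) = sinh (Rmult (INR n.+1) a) /\
                    Rmult (Up n).2.[cosh a] (sinh a) = sinh (Rmult (INR n) a).
Proof.
elim: n => [|n [h1 h2]]; rewrite [Up _]/=.
  rewrite ?hornerC ?horner1 ?horner0 /= ?ssimp ?ssimp0. idtac. split; [by [] | by rewrite ?sinh_0 ?sin_0].
cbn [fst snd]; split; last by [].
rewrite hornerD hornerN hornerMn hornerMX toR h1 h2.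
rewrite [in RHS]S_INR [in RHS]ssimp1 [in RHS]sinh_rec; congr (Rminus _ (sinh _)); rewrite S_INR; exact: ssimp3.
Qed.

Lemma Up_sin n a : Rmult (Up n).1.[cos a] (sin a) = sin (Rmult (INR n.+1) a) /\
                    Rmult (Up n).2.[cos a] (sin a) = sin (Rmult (INR n) a).
Proof.
elim: n => [|n [h1 h2]]; rewrite [Up _]/=.
  rewrite ?hornerC ?horner1 ?horner0 /= ?ssimp ?ssimp0. idtac. split; [by [] | by rewrite sin_0].
cbn [fst snd]; split; last by [].
rewrite hornerD hornerN hornerMn hornerMX toR h1 h2.
rewrite [in RHS]S_INR [in RHS]ssimp1 [in RHS]sin_rec; congr (Rminus _ (sin _)); rewrite S_INR; exact: ssimp3.
Qed.

Lemma Up_roots m k : le 1 k /\ le k m -> (Up m).1.[cc m k] = 0.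
Proof.
move=> hk; have [h _] := Up_sin m (tt m k).
rewrite tt_root in h.
exact: (root_aux _ _ (sin_gt_0 _ (proj1 (tt_bounds _ _ hk)) (proj2 (tt_bounds _ _ hk))) h).
Qed.

Lemma Up_factor m : (Up m).1 = (2%:R ^+ m) *: \prod_(k <- iota 1 m) ('X - (cc m k)%:P).
Proof.
set P := \prod_(k <- iota 1 m) ('X - (cc m k)%:P).
have : exists q, (Up m).1 = q * \prod_(z <- map (cc m) (iota 1 m)) ('X - z%:P).
  apply: uniq_roots_prod_XsubC.
- apply/allP => z /mapP [k]; rewrite mem_iota => hk ->.
  apply/eqP; apply: Up_roots; move/andP: hk => [a b]; split; lia.
- rewrite uniq_rootsE map_inj_in_uniq ?iota_uniq // => k l.
  rewrite !mem_iota => /andP[a b] /andP[c d] e.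
  apply: (cc_inj m) e; split; lia.
case=> q hq.
rewrite big_map -/P in hq.
have [s1 [l1 _]] := Up_size m.
have sP : size P = m.+1 by rewrite size_prod_XsubC size_iota.
have mP : P \is monic by apply: monic_prod_XsubC.
have nzP : P != 0 by apply: monic_neq0.
have nzq : q != 0 by apply: contra_eq_neq hq => ->; rewrite mul0r -size_poly_eq0 s1.
have sq : size q == 1%N.
  move: s1; rewrite hq size_mul // sP addnS /= => e; by rewrite -(eqn_add2r m) e add1n.
have [c _ qc] := size_poly1P _ sq.
rewrite hq qc mul_polyC; congr (_ *: _).
by rewrite -l1 hq qc mul_polyC lead_coefZ (eqP mP) mulr1.
Qed.

Lemma bigiota m (f : nat -> R) : \prod_(k <- iota 1 m) f k = prod_1_to m f.
Proof.
elim: m => [|m IH]; first by rewrite big_nil.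
rewrite (_ : iota 1 m.+1 = iota 1 m ++ [:: m.+1]); last by rewrite -[m.+1]addn1 iotaD add1n addn1.
by rewrite big_cat big_seq1 IH.
Qed.

Lemma U_eval m a : sinh a <> 0 ->
  Rdiv (sinh (Rmult (INR (Nat.add m 1)) a)) (sinh a) =
  prod_1_to m (fun k => Rmult R2 (Rminus (cosh a) (cc m k))).
Proof.
move=> hs; have [h _] := Up_sinh m a.
rewrite Nat.add_1_r -h prod_mul prod_const.
rewrite Up_factor hornerZ horner_prod bigiota.
have -> : prod_1_to m (fun k => (('X - (cc m k)%:P).[cosh a])) = prod_1_to m (fun k => Rminus (cosh a) (cc m k)).
  by apply: prod_ext => k _; rewrite hornerXsubC.
rewrite RpowE R2_INR INRE; exact: divK0.
Qed.
End ChebHelp.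

Lemma sinh_pos_ne a : 0 < a -> sinh a <> 0.
Proof. intros h. pose proof (sinh_lt 0 a h). rewrite sinh_0 in H. lra. Qed.

Theorem mainTheorem11 (m n : nat) (x : R) (alpha beta : nat -> R)
  (hm : (1 <= m)%nat) (hn : (1 <= n)%nat) (hx : 2 < x)
  (halpha_pos : forall j, (1 <= j <= n)%nat -> 0 < alpha j)
  (halpha : forall j, (1 <= j <= n)%nat ->
     cosh (alpha j) + cos (PI * INR j / INR (n + 1)) = x)
  (hbeta_pos : forall k, (1 <= k <= m)%nat -> 0 < beta k)
  (hbeta : forall k, (1 <= k <= m)%nat ->
     cosh (beta k) + cos (PI * INR k / INR (m + 1)) = x) :
  prod_1_to n (fun j => sinh (INR (m + 1) * alpha j) / sinh (alpha j)) =
  prod_1_to m (fun k => sinh (INR (n + 1) * beta k) / sinh (beta k)).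
Proof.
  rewrite (prod_ext n _ (fun j => prod_1_to m (fun k => R2 * (x - cc n j - cc m k)))).
  2:{ intros j hj. rewrite ChebHelp.U_eval by (apply sinh_pos_ne; auto).
      apply prod_ext; intros k hk. rewrite <- (halpha j hj). unfold cc, tt. ring. }
  rewrite (prod_ext m (fun k => sinh (INR (n + 1) * beta k) / sinh (beta k))
             (fun k => prod_1_to n (fun j => R2 * (x - cc n j - cc m k)))).
  2:{ intros k hk. rewrite ChebHelp.U_eval by (apply sinh_pos_ne; auto).
      apply prod_ext; intros j hj. rewrite <- (hbeta k hk). unfold cc, tt. ring. }
  apply prod_swap.
Qed.
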